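(* For integers $t,k\ge0$, the number $b(t,t+2k)$ of marked diagrams $t\to t+2k$ depends only on $t+k$; if $t+k=m$, this number is $\binom{2m}{m}$.
   Context: A Temperley–Lieb diagram $t\to s$ is a rectangle with $t$ points on its bottom edge and $s$ points on its top edge, joined in pairs by $(t+s)/2$ non-crossing arcs, up to isotopy. The arcs divide the rectangle into regions, among which there is a unique leftmost region (the one adjacent to the left edge). A marked diagram $t\to s$ is a Temperley–Lieb diagram $t\to s$ in which each arc lying on the boundary of the leftmost region carries either no mark or exactly one mark (dot), and other arcs carry no mark. *)

(* Defs.v *)
From mathcomp Require Import all_boot.
Set Implicit Arguments. Unset Strict Implicit. Unset Printing Implicit Defensive.

(* Boundary points of a diagram t -> s: inl i = i-th bottom point (from the
   left), inr j = j-th top point (from the left). *)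
Definition pt (t s : nat) : finType := ('I_t + 'I_s)%type.

(* Position of a boundary point when the boundary of the rectangle is read
   counterclockwise starting just after the left edge: bottom points left to
   right (positions 0..t-1), then top points right to left (t..t+s-1).
   The left edge lies between position t+s-1 and position 0. *)
Definition pos (t s : nat) (x : pt t s) : nat :=
  match x with inl i => nat_of_ord i | inr j => t + (s - j.+1) end.

(* A Temperley-Lieb diagram t -> s, up to isotopy, is a non-crossing perfect
   matching of the boundary points; f x is the point joined to x by an arc. *)
Definition TL_diagram (t s : nat) (f : {ffun pt t s -> pt t s}) : bool :=
  [forall x, (f (f x) == x) && (f x != x)] &&
  [forall x, forall y,
     ~~ [&& pos x < pos y, pos y < pos (f x) & pos (f x) < pos (f y)]].

(* The arc through x lies on the boundary of the leftmost region (the region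
   adjacent to the left edge) iff it is not nested inside another arc in the
   linear order of positions (the cut being at the left edge). *)
Definition on_leftmost (t s : nat) (f : {ffun pt t s -> pt t s}) (x : pt t s)
  : bool :=
  ~~ [exists y, (minn (pos y) (pos (f y)) < minn (pos x) (pos (f x))) &&
                (maxn (pos x) (pos (f x)) < maxn (pos y) (pos (f y)))].

(* A marked diagram: a TL diagram f together with the set M of endpoints of
   the marked (dotted) arcs; M is a union of arcs, all lying on the boundary
   of the leftmost region (each such arc carries no mark or exactly one). *)
Definition marked_diagram (t s : nat) (p : {ffun pt t s -> pt t s} * {set pt t s})
  : bool :=
  TL_diagram p.1 &&
  [forall x, (x \in p.2) ==> ((p.1 x \in p.2) && on_leftmost p.1 x)].

Definition b (t s : nat) : nat :=
  #|[pred p : {ffun pt t s -> pt t s} * {set pt t s} | marked_diagram p]|.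

(* Main.v *)
Require Import Defs.
From mathcomp Require Import all_boot all_order all_algebra zify ring.
Import GRing.Theory Num.Theory Order.TTheory.

Ltac nlia := repeat (match goal with H : context [@pos _ _ _] |- _ => revert H end); repeat (match goal with | |- context [@pos ?a ?b ?z] => let p := fresh "p" in set p := @pos a b z end); lia.

Section Main.
Variables t s : nat.
Local Notation T := (pt t s).
Local Notation N := (t + s).
Local Notation ps := (@pos t s).

Lemma pos_lt (x : T) : ps x < N.
Proof. case: x => [i|j] /=; [have := ltn_ord i | have := ltn_ord j]; lia. Qed.

Lemma pos_inj : injective ps.
Proof.
case=> [i|j] [i'|j'] /=; try (have := ltn_ord i); try (have := ltn_ord j);
  try (have := ltn_ord i'); try (have := ltn_ord j'); move=> *.
- by congr inl; apply: val_inj.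
- lia.
- lia.
- congr inr; apply: val_inj => /=; lia.
Qed.

Lemma pos_surj {k} : k < N -> exists x : T, ps x = k.
Proof.
move=> hk; case: (ltnP k t) => hkt.
  by exists (inl (Ordinal hkt)).
have hj : s - 1 - (k - t) < s by lia.
by exists (inr (Ordinal hj)) => /=; lia.
Qed.

Lemma card_T : #|T| = N.
Proof. by rewrite card_sum !card_ord. Qed.


Lemma eq_pos (x y : T) : (ps x == ps y) = (x == y).
Proof. by apply/eqP/eqP => [/pos_inj|->]. Qed.

Definition opn (f : T -> T) (x : T) := ps x < ps (f x).
Definition inI (f : T -> T) (r x : T) :=
  minn (ps r) (ps (f r)) <= ps x <= maxn (ps r) (ps (f r)).
Definition marked (f : T -> T) (M : {set T}) x := [exists r in M, inI f r x].
Definition sg (f : T -> T) M x : int := if marked f M x then (-1)%R else 1%R.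
Definition DD (f : T -> T) k := [set y | opn f y && (ps y < k <= ps (f y))].
Definition depth (f : T -> T) k := #|DD f k|.
Definition cc (S : {set T}) x : int := if x \in S then 1%R else (-1)%R.
Definition hh (S : {set T}) k : int := (\sum_(y | (ps y < k)%N) cc S y)%R.
Definition Phi (p : {ffun T -> T} * {set T}) : {set T} :=
  [set x | opn p.1 x != marked p.1 p.2 x].

Lemma hh0 S : hh S 0 = 0%R.
Proof. by rewrite /hh big_pred0. Qed.

Lemma hh_step S x : hh S (ps x).+1 = (hh S (ps x) + cc S x)%R.
Proof.
rewrite /hh (bigD1 x) /=; last by rewrite ltnSn.
rewrite [RHS]GRing.addrC; congr (_ + _)%R.
apply: eq_bigl => y; rewrite ltnS leq_eqVlt eq_pos.
by case: (eqVneq y x) => [->|nyx]; rewrite ?eqxx ?ltnn ?andbF //= andbT.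
Qed.

Lemma depth0 f : depth f 0 = 0.
Proof. by apply/eqP; rewrite cards_eq0; apply/eqP/setP => y; rewrite !inE ltn0 andbF. Qed.

Lemma depth_big f k : N <= k -> (forall y, ps (f y) < N) -> depth f k = 0.
Proof.
move=> hk hf; apply/eqP; rewrite cards_eq0; apply/eqP/setP => y; rewrite !inE.
have := hf y; case: (ps y < k) => //=; lia.
Qed.

Definition Arc (a : nat -> nat) (u v : T) :=
  [&& ps u < ps v, a (ps v).+1 == a (ps u) &
      [forall k : 'I_N.+1, (ps u < k <= ps v) ==> (a (ps u) < a k)]].

Lemma ArcP a u v : reflect (ps u < ps v /\ a (ps v).+1 = a (ps u) /\
    forall k, ps u < k <= ps v -> a (ps u) < a k) (Arc a u v).
Proof.
apply: (iffP and3P) => [[h1 /eqP h2 /forallP h3]|[h1 [h2 h3]]].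
  split => //; split => // k hk.
  have kN : k < N.+1 by have := pos_lt v; lia.
  by have := h3 (Ordinal kN); rewrite /= hk.
split => //; first by apply/eqP.
by apply/forallP => k; apply/implyP => hk; apply: h3.
Qed.

Lemma Arc_up {a u v} : Arc a u v -> a (ps u) < a (ps u).+1.
Proof. by case/ArcP => h1 [h2 h3]; apply: h3; lia. Qed.

Lemma Arc_down {a u v} : Arc a u v -> a (ps v).+1 < a (ps v).
Proof. by case/ArcP => h1 [h2 h3]; rewrite h2; apply: h3; lia. Qed.

Lemma Arc_uniq1 {a u v v'} : Arc a u v -> Arc a u v' -> v = v'.
Proof.
move=> /ArcP [h1 [h2 h3]] /ArcP [h1' [h2' h3']].
apply: pos_inj; case: (ltngtP (ps v) (ps v')) => // hv.
- have := h3' (ps v).+1; rewrite h2; lia.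
- have := h3 (ps v').+1; rewrite h2'; lia.
Qed.

Lemma Arc_uniq2 {a u u' v} : Arc a u v -> Arc a u' v -> u = u'.
Proof.
move=> /ArcP [h1 [h2 h3]] /ArcP [h1' [h2' h3']].
apply: pos_inj; case: (ltngtP (ps u) (ps u')) => // hu.
- have := h3 (ps u'); rewrite -h2 h2'; lia.
- have := h3' (ps u); rewrite -h2' h2; lia.
Qed.

Lemma Arc_excl {a u v w} : Arc a u v -> Arc a w u -> False.
Proof. by move=> /Arc_up h1 /Arc_down h2; lia. Qed.

Section Match.
Context {f : {ffun T -> T}}.
Hypothesis Hf : TL_diagram f.

Lemma ffK x : f (f x) = x.
Proof. by case/andP: Hf => /forallP /(_ x) /andP [/eqP]. Qed.

Lemma fne x : f x != x.
Proof. by case/andP: Hf => /forallP /(_ x) /andP []. Qed.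

Lemma ncr x y : ~~ [&& ps x < ps y, ps y < ps (f x) & ps (f x) < ps (f y)].
Proof. by case/andP: Hf => _ /forallP /(_ x) /forallP /(_ y). Qed.

Lemma pfne x : ps (f x) != ps x.
Proof. by rewrite eq_pos fne. Qed.

Lemma opnf x : opn f (f x) = ~~ opn f x.
Proof. rewrite /opn ffK; have := pfne x; lia. Qed.

Lemma inv_in x z : opn f x -> ps x < ps z < ps (f x) -> ps x < ps (f z) < ps (f x).
Proof.
rewrite /opn => ox hz.
have h1 : ps (f z) != ps x.
  rewrite eq_pos; apply/eqP => e; move: hz; rewrite -e ffK; lia.
have h2 : ps (f z) != ps (f x).
  rewrite eq_pos; apply/eqP => e; move: hz; rewrite -(ffK z) e ffK; lia.
have h3 := pfne z.
have n1 := ncr x z.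
have n2 := ncr (f z) x; rewrite ffK in n2.
lia.
Qed.

Lemma mm x : (minn (ps x) (ps (f x)) = if opn f x then ps x else ps (f x)) /\
             (maxn (ps x) (ps (f x)) = if opn f x then ps (f x) else ps x).
Proof. rewrite /opn; have := pfne x; case: ifP; lia. Qed.

Lemma inI_f r : inI f (f r) =1 inI f r.
Proof. by move=> x; rewrite /inI ffK minnC maxnC. Qed.

Lemma lm_f r : on_leftmost f (f r) = on_leftmost f r.
Proof. by rewrite /on_leftmost ffK minnC maxnC. Qed.

Lemma opener r : exists u, [/\ opn f u, u = r \/ u = f r & ps u < ps (f u)].
Proof.
case o: (opn f r); first by exists r; split => //; left.
exists (f r); split; [by rewrite opnf o| by right| by have := opnf r; rewrite o].
Qed.

Lemma inI_opn u x : opn f u -> inI f u x = (ps u <= ps x <= ps (f u)).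
Proof. by move=> o; rewrite /inI; case: (mm u) => -> ->; rewrite o. Qed.

Lemma nest u v z : opn f u -> opn f v -> on_leftmost f u ->
  ps u <= ps z <= ps (f u) -> ps v <= ps z <= ps (f v) ->
  ps u <= ps v /\ ps (f v) <= ps (f u).
Proof.
move=> ou ov lu hu hv.
case: (v =P u) => [->|nvu]; first by [].
move: lu; rewrite /on_leftmost => /existsPn /(_ v).
case: (mm u) => -> ->; case: (mm v) => -> ->; rewrite ou ov => lu.
have e1 : ps v != ps u by rewrite eq_pos; apply/eqP.
have e2 : ps (f v) != ps (f u).
  by rewrite eq_pos; apply/eqP => e; apply: nvu; rewrite -(ffK v) e ffK.
have e3 : ps v != ps (f u).
  by rewrite eq_pos; apply/eqP => e; move: ov; rewrite e opnf ou.
have e4 : ps (f v) != ps u.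
  by rewrite eq_pos; apply/eqP => e; move: ou; rewrite -e opnf ov.
have n1 := ncr u v; have n2 := ncr v u.
move: ou ov; rewrite /opn => ou ov.
lia.
Qed.


Lemma fy_eq x y : (ps (f y) == ps x) = (y == f x).
Proof. rewrite eq_pos; apply/eqP/eqP => [<-|->]; by rewrite ffK. Qed.

Lemma DD_step x :
  DD f (ps x).+1 = if opn f x then x |: DD f (ps x) else DD f (ps x) :\ f x.
Proof.
apply/setP => y; have := opnf x; rewrite /opn => ofx.
case ox: (ps x < ps (f x)); rewrite !inE /opn.
- case: (eqVneq y x) => [->|nyx]; first by rewrite ox /=; lia.
  case: (eqVneq y (f x)) => [->|nyfx]; first by rewrite ffK; lia.
  have e1 : ps y != ps x by rewrite eq_pos.
  have e2 : ps (f y) != ps x by rewrite fy_eq.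
  apply/idP/idP; lia.
- case: (eqVneq y x) => [->|nyx]; first by rewrite ox /=; lia.
  case: (eqVneq y (f x)) => [->|nyfx]; first by rewrite ffK; lia.
  have e1 : ps y != ps x by rewrite eq_pos.
  have e2 : ps (f y) != ps x by rewrite fy_eq.
  apply/idP/idP; lia.
Qed.

Lemma depth_step x :
  (Posz (depth f (ps x).+1) = Posz (depth f (ps x)) + (if opn f x then 1 else -1))%R.
Proof.
rewrite /depth DD_step; case ox: (opn f x).
- have nx : x \notin DD f (ps x) by rewrite inE ltnn /= andbF.
  rewrite cardsU1 nx /=; lia.
- have : f x \in DD f (ps x).
    rewrite inE opnf ox /= ffK leqnn andbT.
    by move/negbT: ox; rewrite /opn; have := pfne x; nlia.
  move=> fin; rewrite [#|DD f (ps x)|](cardsD1 (f x)) fin /=; lia.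
Qed.

Lemma marked_const (M : {set T}) x x' : (forall r, r \in M -> on_leftmost f r) ->
  ps x' = (ps x).+1 -> 0 < depth f (ps x).+1 -> marked f M x = marked f M x'.
Proof.
move=> HM ex' /card_gt0P [y]; rewrite inE => /andP [oy hy].
rewrite /marked; apply: eq_existsb => r; case rM: (r \in M) => //=.
have lr := HM r rM.
have [u [ou eu _]] := opener r.
have [Iu lu] : inI f r =1 inI f u /\ on_leftmost f u.
  case: eu => ->; first by [].
  by split; [move=> z; rewrite inI_f | rewrite lm_f ].
rewrite !Iu !inI_opn //.
move: (oy) (ou); rewrite /opn => oy' ou'.
apply/idP/idP => hz.
- have hv : ps y <= ps x <= ps (f y) by move: hy; nlia.
  have := @nest u y x ou oy lu hz hv; move: hy hz; rewrite ex'; nlia.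
- have hv : ps y <= ps x' <= ps (f y) by move: hy; rewrite ex'; nlia.
  have := @nest u y x' ou oy lu hz hv; move: hy hz; rewrite ex'; nlia.
Qed.

Lemma cc_Phi (M : {set T}) x :
  cc (Phi (f, M)) x = (sg f M x * (if opn f x then 1 else -1))%R.
Proof. by rewrite /cc /Phi inE /sg /=; case: (opn f x); case: (marked f M x). Qed.

Lemma h_formula {M : {set T}} : (forall r, r \in M -> on_leftmost f r) ->
  forall x, hh (Phi (f, M)) (ps x).+1 = (sg f M x * Posz (depth f (ps x).+1))%R.
Proof.
move=> HM; suff H : forall k x, ps x = k ->
  hh (Phi (f, M)) (ps x).+1 = (sg f M x * Posz (depth f (ps x).+1))%R.
  by move=> x; apply: (H _ x).
elim=> [|k IH] x ex.
  by rewrite hh_step depth_step ex hh0 depth0 cc_Phi; ring.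
have [x' ex'] : exists x', ps x' = k.
  by apply: pos_surj; have := pos_lt x; lia.
rewrite hh_step depth_step cc_Phi ex -ex' IH //.
case: (posnP (depth f (ps x').+1)) => [->|dpos]; first by ring.
have := @marked_const M x' x HM (etrans ex (congr1 S (esym ex'))) dpos.
by rewrite /sg => ->; ring.
Qed.

Lemma depth_in x k : opn f x -> ps x < k <= ps (f x) -> depth f (ps x) < depth f k.
Proof.
move=> ox hk.
have nx : x \notin DD f (ps x) by rewrite inE ltnn /= andbF.
apply: (@leq_trans #|x |: DD f (ps x)|); first by rewrite cardsU1 nx.
apply: subset_leq_card; apply/subsetP => y; rewrite !inE.
case: (eqVneq y x) => [->|nyx] /=; first by rewrite ox.
case/andP => oy hy; rewrite oy /=.
have e1 : ps (f y) != ps x.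
  rewrite fy_eq; apply/eqP => eyf; move: oy; rewrite eyf opnf ox //.
have e2 : ps (f y) != ps (f x).
  by rewrite eq_pos (can_eq ffK).
have n1 := ncr y x.
move: ox oy hk hy; rewrite /opn; nlia.
Qed.

Lemma DD_ret x : opn f x -> DD f (ps (f x)).+1 = DD f (ps x).
Proof.
move=> ox; apply/setP => y; rewrite !inE.
case: (eqVneq y x) => [->|nyx]; first by move: ox; rewrite /opn; nlia.
case: (eqVneq y (f x)) => [->|nyfx]; first by rewrite opnf ox.
case oy: (opn f y) => //=.
have e1 : ps (f y) != ps x by rewrite fy_eq.
have e2 : ps (f y) != ps (f x).
  by rewrite eq_pos (can_eq ffK).
have e3 : ps y != ps x by rewrite eq_pos.
have e4 : ps y != ps (f x) by rewrite eq_pos.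
have n1 := ncr y x.
case: (boolP (ps x < ps y < ps (f x))) => hxy.
  have := @inv_in x y ox hxy; move: ox oy; rewrite /opn; nlia.
move: ox oy; rewrite /opn; nlia.
Qed.

Lemma Arc_f a : a =1 depth f -> forall x, opn f x -> Arc a x (f x).
Proof.
move=> ha x ox; apply/ArcP; split; first by [].
split; first by rewrite !ha /depth DD_ret.
by move=> k hk; rewrite !ha; apply: depth_in.
Qed.

End Match.


Lemma f_det (f g : {ffun T -> T}) : TL_diagram f -> TL_diagram g ->
  (forall k, depth f k = depth g k) -> f = g.
Proof.
move=> Hf Hg hd; apply/ffunP => x.
have hf : depth f =1 depth f by [].
have hg : depth f =1 depth g by [].
case ox: (opn f x).
  have A1 := Arc_f Hf _ hf _ ox.
  case oy: (opn g x); first by apply: Arc_uniq1 A1 (Arc_f Hg _ hg _ oy).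
  have oy' : opn g (g x) by rewrite opnf // oy.
  have := Arc_f Hg _ hg _ oy'; rewrite ffK // => A2.
  by case: (Arc_excl A1 A2).
have ox' : opn f (f x) by rewrite opnf // ox.
have := Arc_f Hf _ hf _ ox'; rewrite ffK // => A1.
case oy: (opn g x); first by case: (Arc_excl (Arc_f Hg _ hg _ oy) A1).
have oy' : opn g (g x) by rewrite opnf // oy.
have := Arc_f Hg _ hg _ oy'; rewrite ffK // => A2.
exact: Arc_uniq2 A1 A2.
Qed.

Lemma md_TL {p : {ffun T -> T} * {set T}} : marked_diagram p -> TL_diagram p.1.
Proof. by case/andP. Qed.

Lemma md_M {p : {ffun T -> T} * {set T}} : marked_diagram p ->
  forall r, r \in p.2 -> (p.1 r \in p.2) /\ on_leftmost p.1 r.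
Proof.
by case/andP => _ /forallP H r rM; have /implyP /(_ rM) /andP [] := H r.
Qed.

Lemma md_lm {p : {ffun T -> T} * {set T}} : marked_diagram p ->
  forall r, r \in p.2 -> on_leftmost p.1 r.
Proof. by move=> H r rM; case: (md_M H r rM). Qed.

Lemma depth_eq_Phi {f g M M'} : marked_diagram (f, M) -> marked_diagram (g, M') ->
  Phi (f, M) = Phi (g, M') -> forall k, depth f k = depth g k.
Proof.
move=> H1 H2 e k.
case: k => [|k]; first by rewrite !depth0.
case: (ltnP k N) => hk.
  have [x ex] := pos_surj hk.
  have := h_formula (md_TL H1) (md_lm H1) x.
  rewrite e (h_formula (md_TL H2) (md_lm H2)) ex /sg.
  by case: (marked f M x); case: (marked g M' x); rewrite /=; lia.
by rewrite !depth_big //; try (by move=> y; apply: pos_lt); apply: leqW.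
Qed.

Lemma M_sub {f M M'} : marked_diagram (f, M) -> marked_diagram (f, M') ->
  Phi (f, M) = Phi (f, M') -> M \subset M'.
Proof.
move=> H1 H2 e; have Hf : TL_diagram f := md_TL H1.
apply/subsetP => p pM.
have [u [ou eu _]] := opener Hf p.
have uD : u \in DD f (ps u).+1 by rewrite inE ou ltnSn /=; apply: ou.
have dpos : 0 < depth f (ps u).+1 by apply/card_gt0P; exists u.
have mu : marked f M u.
  apply/existsP; exists p; rewrite pM /=.
  case: eu => eu; first by rewrite -eu inI_opn // leqnn /=; apply: ltnW.
  by rewrite -(inI_f Hf) -eu inI_opn // leqnn /=; apply: ltnW.
have mu' : marked f M' u.
  have := h_formula Hf (md_lm H1) u; rewrite e (h_formula Hf (md_lm H2)) /sg mu.
  by case: (marked f M' u) => //; move: dpos; rewrite /=; lia.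
case/existsP: mu' => r' /andP [r'M hr'].
have [u' [ou' eu' _]] := opener Hf r'.
have [r'M1 lr'] := md_M H2 _ r'M.
have lu' : on_leftmost f u'.
  by case: eu' => ->; rewrite ?(lm_f Hf).
have [_ lp] := md_M H1 _ pM.
have lu : on_leftmost f u.
  by case: eu => ->; rewrite ?(lm_f Hf).
have Iu' : inI f u' u.
  by case: eu' hr' => -> //; rewrite (inI_f Hf).
rewrite inI_opn // in Iu'.
have Iu : ps u <= ps u <= ps (f u) by rewrite leqnn /=; apply: ltnW.
have := nest Hf u' u u ou' ou lu' Iu' Iu.
have := nest Hf u u' u ou ou' lu Iu Iu'.
move=> [n1 n2] [n3 n4].
have euu : u = u' by apply: pos_inj; apply/eqP; rewrite eqn_leq n1 n3.
have u'M : u' \in M' by case: eu' => ->.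
case: eu => eu.
  by rewrite -eu euu.
by rewrite -(ffK Hf p) -eu euu; have [] := md_M H2 _ u'M.
Qed.

Lemma Phi_inj p q : marked_diagram p -> marked_diagram q -> Phi p = Phi q -> p = q.
Proof.
case: p => f M; case: q => g M' H1 H2 e.
have efg : f = g := @f_det f g (md_TL H1) (md_TL H2) (depth_eq_Phi H1 H2 e).
move: H2 e; rewrite -efg => H2 e.
congr pair; apply/eqP; rewrite eqEsubset.
by rewrite (M_sub H1 H2 e) (M_sub H2 H1 (esym e)).
Qed.


Lemma ivt (g : nat -> nat) i j c : i <= j ->
  (forall k, i <= k < j -> g k.+1 = g k + 1 \/ g k = g k.+1 + 1) ->
  (g i <= c <= g j) || (g j <= c <= g i) -> exists k, i <= k <= j /\ g k = c.
Proof.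
elim: j => [|j IH] hij hs hc.
  by exists 0; move: hij hc; rewrite leqn0 => /eqP ->; lia.
case: (eqVneq i j.+1) => [ei|nei].
  by exists j.+1; move: hc; rewrite ei; lia.
have hij' : i <= j by lia.
have hs' : forall k, i <= k < j -> g k.+1 = g k + 1 \/ g k = g k.+1 + 1.
  by move=> k hk; apply: hs; lia.
case: (boolP ((g i <= c <= g j) || (g j <= c <= g i))) => hc'.
  by have [k [hk ek]] := IH hij' hs' hc'; exists k; split => //; lia.
exists j.+1; split; first lia.
have := hs j; move: hc hc' hij'; lia.
Qed.

Lemma mm_opener {f : {ffun T -> T}} : TL_diagram f -> forall y, exists v,
  [/\ opn f v, minn (ps y) (ps (f y)) = ps v & maxn (ps y) (ps (f y)) = ps (f v)].
Proof.
move=> Hf y; have [v [ov ev _]] := opener Hf y.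
exists v; have [h1 h2] := mm Hf v; rewrite ov in h1 h2.
case: ev => ev; subst v; first by split.
by rewrite (ffK Hf) in h1 h2; rewrite minnC maxnC h1 h2 (ffK Hf).
Qed.

Lemma hhN S : hh S N = (Posz #|S| - Posz #|~: S|)%R.
Proof.
rewrite /hh (eq_bigl (fun=> true)); last by move=> y; rewrite pos_lt.
rewrite (bigID (mem S)) /=.
rewrite (eq_bigr (fun=> 1%R)); last by move=> i; rewrite /cc => ->.
rewrite [X in (_ + X)%R](eq_bigr (fun=> (-1)%R)); last by move=> i /negbTE; rewrite /cc => ->.
rewrite !sumr_const.
have -> : #|[pred i | ~~ mem S i]| = #|~: S| by apply: eq_card => y; rewrite !inE.
by rewrite mulNrn !natz.
Qed.

Section Psi.
Variable S : {set T}.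
Hypothesis HS : hh S N = 0%R.

Definition aa k := absz (hh S k).

Lemma hstep {k} : k < N -> hh S k.+1 = (hh S k + 1)%R \/ hh S k.+1 = (hh S k - 1)%R.
Proof.
move=> hk; have [x ex] := pos_surj hk.
by rewrite -ex hh_step /cc; case: (x \in S); [left|right].
Qed.

Lemma astep {k} : k < N -> aa k.+1 = aa k + 1 \/ aa k = aa k.+1 + 1.
Proof. by move=> hk; have := hstep hk; rewrite /aa; lia. Qed.

Lemma astep' {i j} : j <= N ->
  forall k, i <= k < j -> aa k.+1 = aa k + 1 \/ aa k = aa k.+1 + 1.
Proof. by move=> hj k hk; apply: astep; lia. Qed.

Lemma aa0 : aa 0 = 0.
Proof. by rewrite /aa hh0. Qed.

Lemma aaN : aa N = 0.
Proof. by rewrite /aa HS. Qed.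

Lemma ex_up x : aa (ps x) < aa (ps x).+1 -> exists y, Arc aa x y.
Proof.
move=> hup; set c := aa (ps x).
have hx := pos_lt x.
have hup' : aa (ps x).+1 = c + 1 by have := astep hx; rewrite -/c; lia.
pose P k := (ps x < k) && (aa k == c).
have [k [hk ek]] := @ivt aa (ps x).+1 N c hx (astep' (leqnn N))
     ltac:(rewrite aaN hup'; lia).
have Pk : P k by rewrite /P ek eqxx andbT; lia.
case: (ex_minnP (ex_intro P k Pk)) => k0 /andP [h1 /eqP h2] mink.
have k0k := mink k Pk.
have k0x : (ps x).+1 < k0.
  case: (eqVneq k0 (ps x).+1) => [e|ne]; last by lia.
  by move: h2; rewrite e hup'; lia.
have [y ey] : exists y, ps y = k0.-1 by apply: pos_surj; lia.
exists y; apply/ArcP; split; first by lia.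
split; first by rewrite ey prednK ?h2 //; lia.
move=> k1 hk1; rewrite -/c; case: (ltnP c (aa k1)) => // hle.
have [k2 [hk2 ek2]] := @ivt aa (ps x).+1 k1 c ltac:(lia) (astep' (j:=k1) ltac:(have := pos_lt y; lia))
   ltac:(rewrite hup'; lia).
have := mink k2; rewrite /P ek2 eqxx andbT => H.
have := H ltac:(lia); lia.
Qed.

Lemma ex_down x : aa (ps x).+1 < aa (ps x) -> exists y, Arc aa y x.
Proof.
move=> hdn; set c := aa (ps x).+1.
have hx := pos_lt x.
have hdn' : aa (ps x) = c + 1 by have := astep hx; rewrite -/c; lia.
pose P k := (k <= ps x) && (aa k == c).
have [k [hk ek]] := @ivt aa 0 (ps x) c (leq0n _) (astep' (j:=ps x) (ltnW hx))
     ltac:(rewrite aa0 hdn'; lia).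
have Pk : P k by rewrite /P ek eqxx andbT; lia.
have ub : forall i, P i -> i <= ps x by move=> i /andP [].
case: (ex_maxnP (ex_intro P k Pk) ub) => k0 /andP [h1 /eqP h2] maxk.
have k0x : k0 < ps x.
  case: (eqVneq k0 (ps x)) => [e|ne]; last by lia.
  by move: h2; rewrite e hdn'; lia.
have [y ey] : exists y, ps y = k0 by apply: pos_surj; lia.
exists y; apply/ArcP; split; first by lia.
split; first by rewrite ey h2.
move=> k1 hk1; rewrite ey h2; case: (ltnP c (aa k1)) => // hle.
have [k2 [hk2 ek2]] := @ivt aa k1 (ps x) c ltac:(lia) (astep' (j:=ps x) (ltnW hx))
   ltac:(rewrite hdn'; lia).
have := maxk k2; rewrite /P ek2 eqxx andbT => H.
have := H ltac:(lia); lia.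
Qed.

Definition fPsi : {ffun T -> T} := [ffun x => odflt x [pick y | Arc aa x y || Arc aa y x]].

Lemma fPsi_spec x : Arc aa x (fPsi x) || Arc aa (fPsi x) x.
Proof.
rewrite ffunE; case: pickP => [y //|none] /=; exfalso.
have hx := pos_lt x.
case: (astep hx) => h.
  have [y Ay] := @ex_up x ltac:(lia).
  by have := none y; rewrite Ay.
have [y Ay] := @ex_down x ltac:(lia).
by have := none y; rewrite Ay orbT.
Qed.

Lemma fPsi_opn x : opn fPsi x = (aa (ps x) < aa (ps x).+1).
Proof.
case/orP: (fPsi_spec x) => A.
  by rewrite /opn (Arc_up A); case/ArcP: A => ->.
have := Arc_down A; case/ArcP: A => h _; rewrite /opn; lia.
Qed.

Lemma fPsi_Arc {x} : opn fPsi x -> Arc aa x (fPsi x).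
Proof.
case/orP: (fPsi_spec x) => // A; case/ArcP: (A) => h _; rewrite /opn; lia.
Qed.

Lemma fPsi_TL : TL_diagram fPsi.
Proof.
apply/andP; split.
  apply/forallP => x; apply/andP; split; last first.
    case/orP: (fPsi_spec x) => /ArcP [h _]; apply/eqP => e; move: h; rewrite e; lia.
  have := fPsi_spec x; have := fPsi_spec (fPsi x).
  case/orP => A1; case/orP => A2.
  - by case: (Arc_excl A1 A2).
  - by rewrite (Arc_uniq1 A1 A2).
  - by rewrite (Arc_uniq2 A1 A2).
  - by case: (Arc_excl A2 A1).
apply/forallP => x; apply/forallP => y; apply/negP => /and3P [h1 h2 h3].
have Ax : Arc aa x (fPsi x) by apply: fPsi_Arc; rewrite /opn; lia.
have Ay : Arc aa y (fPsi y) by apply: fPsi_Arc; rewrite /opn; lia.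
case/ArcP: Ax => _ [ex hx]; case/ArcP: Ay => _ [ey hy].
have := hx (ps y) ltac:(lia); have := hy (ps (fPsi x)).+1 ltac:(lia).
rewrite ex; lia.
Qed.

Definition MPsi : {set T} :=
  [set x | ((aa (ps x) == 0) && (hh S (ps x).+1 < 0)%R) ||
           ((aa (ps x).+1 == 0) && (hh S (ps x) < 0)%R)].

Lemma sign_const i j : i <= j <= N -> (forall k, i <= k <= j -> 0 < aa k) ->
  (hh S i < 0)%R = (hh S j < 0)%R.
Proof.
elim: j => [|j IH] hij hpos.
  by move: hij; rewrite leqn0 => /andP [/eqP -> _].
case: (eqVneq i j.+1) => [-> //|nei].
rewrite IH; last 2 first.
- lia.
- by move=> k hk; apply: hpos; lia.
have := hpos j ltac:(lia); have := hpos j.+1 ltac:(lia).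
have := hstep (k := j) ltac:(lia); rewrite /aa => hs p1 p2.
apply/idP/idP; lia.
Qed.

Lemma hh_aa0 k : aa k = 0 -> hh S k = 0%R.
Proof. rewrite /aa; lia. Qed.

Lemma MPsi_up {x} : x \in MPsi -> opn fPsi x ->
  aa (ps x) = 0 /\ (hh S (ps x).+1 < 0)%R.
Proof.
rewrite inE fPsi_opn => /orP [/andP [/eqP h1 h2]|/andP [/eqP h1 h2]] o //.
lia.
Qed.

Lemma MPsi_down {x} : x \in MPsi -> ~~ opn fPsi x ->
  aa (ps x).+1 = 0 /\ (hh S (ps x) < 0)%R.
Proof.
rewrite inE fPsi_opn => /orP [/andP [/eqP h1 h2]|/andP [/eqP h1 h2]] o //.
have := astep (pos_lt x); lia.
Qed.

Lemma MPsi_closed x : x \in MPsi -> fPsi x \in MPsi.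
Proof.
move=> xM; have TL := fPsi_TL.
case ox: (opn fPsi x).
  have [h1 h2] := MPsi_up xM ox.
  have /ArcP [l1 [l2 l3]] := fPsi_Arc ox.
  rewrite inE l2 h1 eqxx /=; apply/orP; right.
  have sc : (hh S (ps x).+1 < 0)%R = (hh S (ps (fPsi x)) < 0)%R.
    apply: sign_const; first by have := pos_lt (fPsi x); lia.
    by move=> k hk; have := l3 k ltac:(lia); lia.
  by rewrite -sc h2.
have [h1 h2] := MPsi_down xM (negbT ox).
have ox' : opn fPsi (fPsi x) by rewrite (opnf TL) ox.
have /ArcP [l1 [l2 l3]] := fPsi_Arc ox'.
rewrite (ffK TL) in l1 l2 l3.
rewrite inE -l2 h1 eqxx /=.
have sc : (hh S (ps (fPsi x)).+1 < 0)%R = (hh S (ps x) < 0)%R.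
  apply: sign_const; first by have := pos_lt x; lia.
  by move=> k hk; have := l3 k ltac:(lia); lia.
by rewrite sc h2.
Qed.

Lemma MPsi_lm x : x \in MPsi -> on_leftmost fPsi x.
Proof.
move=> xM; have TL := fPsi_TL.
have [u [ou eu _]] := opener TL x.
have uM : u \in MPsi by case: eu => ->; last by apply: MPsi_closed.
have lx : on_leftmost fPsi x = on_leftmost fPsi u.
  by case: eu => ->; rewrite ?(lm_f TL).
rewrite lx; have [hu _] := MPsi_up uM ou.
apply/existsPn => y; apply/negP => /andP [].
have [v [ov -> ->]] := mm_opener TL y.
have [h1 h2] := mm TL u; rewrite ou in h1 h2; rewrite h1 h2 => l1 l2.
have /ArcP [_ [_ l3]] := fPsi_Arc ov.
have := l3 (ps u); move: ou; rewrite /opn; nlia.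
Qed.

Lemma Psi_md : marked_diagram (fPsi, MPsi).
Proof.
apply/andP; split; first exact: fPsi_TL.
apply/forallP => x; apply/implyP => xM /=.
by rewrite MPsi_closed // MPsi_lm.
Qed.

Lemma depth_aa k : k <= N -> depth fPsi k = aa k.
Proof.
elim: k => [|k IH] hk; first by rewrite depth0 aa0.
have [x ex] := @pos_surj k hk.
have := depth_step fPsi_TL x; rewrite fPsi_opn ex IH; last by lia.
have := astep hk; case: ltnP; lia.
Qed.

Lemma sg_aa x : (sg fPsi MPsi x * Posz (aa (ps x).+1))%R = hh S (ps x).+1.
Proof.
have TL := fPsi_TL.
case: (eqVneq (aa (ps x).+1) 0) => [z|nz].
  by rewrite z hh_aa0 // GRing.mulr0.
rewrite /sg; suff -> : marked fPsi MPsi x = (hh S (ps x).+1 < 0)%R.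
  by move: nz; rewrite /aa; case: ifP; lia.
apply/idP/idP.
  case/existsP => r /andP [rM hr].
  have [u [ou eu _]] := opener TL r.
  have uM : u \in MPsi by case: eu => ->; last by apply: MPsi_closed.
  have hu : ps u <= ps x <= ps (fPsi u).
    by rewrite -inI_opn //; case: eu hr => -> //; rewrite (inI_f TL).
  have [a0 hneg] := MPsi_up uM ou.
  have /ArcP [l1 [l2 l3]] := fPsi_Arc ou.
  have nxe : ps x != ps (fPsi u).
    by apply/eqP => e; move: nz; rewrite e l2 a0.
  rewrite -(@sign_const (ps u).+1 (ps x).+1) //.
    by have := pos_lt (fPsi u); move: hu nxe; nlia.
  move=> k hk; have := l3 k; move: hu nxe hk; nlia.
move=> hneg.
pose P k := (k <= ps x) && (hh S k == 0%R).
have P0 : P 0 by rewrite /P hh0 eqxx.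
have ub : forall i, P i -> i <= ps x by move=> i /andP [].
case: (ex_maxnP (ex_intro P 0 P0) ub) => k0 /andP [k0x /eqP hk0] maxk.
have [u eu] : exists u, ps u = k0 by apply: pos_surj; have := pos_lt x; lia.
have sc : (hh S k0.+1 < 0)%R = (hh S (ps x).+1 < 0)%R.
  apply: sign_const; first by have := pos_lt x; lia.
  move=> k hk; case: (eqVneq k (ps x).+1) => [-> |nk]; first by lia.
  rewrite /aa; case: (eqVneq (hh S k) 0%R) => [e|]; last by lia.
  have := maxk k; rewrite /P e eqxx andbT => H; have := H ltac:(lia); lia.
rewrite hneg in sc.
have hs := hstep (k := k0) ltac:(have := pos_lt x; lia).
have ou : opn fPsi u by rewrite fPsi_opn eu /aa; lia.
have uM : u \in MPsi.
  by rewrite inE eu /aa hk0 sc; lia.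
apply/existsP; exists u; rewrite uM /= inI_opn // eu k0x /=.
have /ArcP [l1 [l2 l3]] := fPsi_Arc ou.
case: (leqP (ps x) (ps (fPsi u))) => // hlt.
have := maxk (ps (fPsi u)).+1; rewrite /P.
have -> : hh S (ps (fPsi u)).+1 = 0%R by apply: hh_aa0; rewrite l2 eu /aa hk0.
rewrite eqxx andbT => H; have := H hlt; rewrite -eu; lia.
Qed.

Lemma Phi_Psi : Phi (fPsi, MPsi) = S.
Proof.
have TL := fPsi_TL.
have H1 : forall x, hh (Phi (fPsi, MPsi)) (ps x).+1 = hh S (ps x).+1.
  move=> x; rewrite (h_formula TL (@MPsi_lm)) depth_aa ?sg_aa //.
  exact: pos_lt.
apply/setP => x.
have H0 : hh (Phi (fPsi, MPsi)) (ps x) = hh S (ps x).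
  case e: (ps x) => [|k]; first by rewrite !hh0.
  have [x' ex'] : exists x', ps x' = k by apply: pos_surj; have := pos_lt x; lia.
  by rewrite -ex' H1.
have := H1 x; rewrite !hh_step H0 => /addrI.
by rewrite /cc; case: (x \in Phi _); case: (x \in S).
Qed.

End Psi.


Lemma count_md m : N = m + m ->
  #|[set p : {ffun T -> T} * {set T} | marked_diagram p]| = 'C(N, m).
Proof.
move=> hN.
set A := [set p : {ffun T -> T} * {set T} | marked_diagram p].
have inj : {in A &, injective Phi}.
  by move=> p q; rewrite !inE; apply: Phi_inj.
rewrite -(card_in_imset inj).
have cT : #|T| = N := card_T.
have -> : Phi @: A = [set S : {set T} | #|S| == m].
  apply/setP => S; rewrite inE; apply/imsetP/eqP.
    case=> p; rewrite inE => pA ->.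
    have hz : hh (Phi p) N = 0%R.
      case: (posnP N) => [N0|Npos]; first by rewrite N0 hh0.
      have [x ex] : exists x, ps x = N.-1 by apply: pos_surj; lia.
      have := h_formula (md_TL pA) (md_lm pA) x.
      rewrite ex prednK // => ->.
      by rewrite depth_big // ?GRing.mulr0 // => y; apply: pos_lt.
    have := cardsC (Phi p); move: hz; rewrite hhN cT; lia.
  move=> cS.
  have HS : hh S N = 0%R by have := cardsC S; rewrite hhN cT; lia.
  exists (fPsi S, MPsi S); first by rewrite inE Psi_md.
  by rewrite Phi_Psi.
by rewrite card_draws card_T.
Qed.

End Main.

Theorem proposition5p2 :
  (forall t k t' k' : nat, t + k = t' + k' -> b t (t + 2 * k) = b t' (t' + 2 * k'))
  /\ (forall t k m : nat, t + k = m -> b t (t + 2 * k) = 'C(2 * m, m)).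
Proof.
have P2 : forall t k m : nat, t + k = m -> b t (t + 2 * k) = 'C(2 * m, m).
  move=> t k m hm.
  have := @count_md t (t + 2 * k) m ltac:(lia).
  have -> : t + (t + 2 * k) = 2 * m by lia.
  move=> <-; rewrite /b; apply: eq_card => p; rewrite inE.
  by [].
split => //.
by move=> t k t' k' e; rewrite (P2 t k (t + k)) // (P2 t' k' (t + k)).
Qed.
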